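(* For any $\delta>0$ there exists $c=c(\delta)>0$ such that the following holds. For any $\varepsilon\in(0,c)$, any simple graph $G=(V,E)$ on $n\ge\varepsilon^{-2}$ vertices with minimal degree at least $\delta n$, any $U\subset V$ with $|U|\ge\varepsilon\sqrt n$ and any vertex $v$ of $G$, \[ \Pr_v\left(X\left[0,2\left(t^G_{\mathrm{mix}}(\varepsilon/2)+\lfloor\sqrt n\rfloor\right)\right]\cap U=\varnothing\right)\le 1-\frac{\varepsilon\delta}{4}, \] where $X$ is the (non-lazy) simple random walk on $G$ started at $v$.
   Context: $t^G_{\mathrm{mix}}(\varepsilon)=\max_v\min\{t\ge0:\|\mathbf p^t(v,\cdot)-\pi\|_{\mathrm{TV}}<\varepsilon\}$ is defined for the lazy random walk on $G$ (stay put with probability $1/2$, otherwise move to a uniform neighbour), with $\pi(v)=\deg(v)/2|E|$ and total variation distance $\frac12\sum_v|\mu(v)-\nu(v)|$. For $a,b\ge0$, $X[a,b]$ denotes the set $\{X_i: i\in[\lceil a\rceil,\lfloor b\rfloor]\cap\mathbb N\}$. *)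

(* Defs.v *)
From HB Require Import structures.
From mathcomp Require Import all_boot all_order all_algebra.
From mathcomp Require Import reals.
Set Implicit Arguments. Unset Strict Implicit. Unset Printing Implicit Defensive.
Import Order.TTheory GRing.Theory Num.Theory.
Local Open Scope ring_scope.

Section Walks.
Variables (R : realType) (T : finType) (e : rel T).

Definition simple_graph : Prop := symmetric e /\ irreflexive e.

Definition deg (x : T) : nat := #|[set y | e x y]|.

Definition srw (x y : T) : R := (e x y)%:R / (deg x)%:R.

Definition lazy_srw (x y : T) : R := (x == y)%:R / 2 + srw x y / 2.

Fixpoint lazy_dist (t : nat) (v y : T) : R :=
  match t with
  | 0 => (v == y)%:R
  | t'.+1 => \sum_(x : T) lazy_dist t' v x * lazy_srw x y
  end.

Definition nedges : nat := #|[set p : T * T | e p.1 p.2]| %/ 2.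

Definition stat (v : T) : R := (deg v)%:R / (2 * (nedges)%:R).

Definition tv_to_stat (t : nat) (v : T) : R :=
  2^-1 * \sum_(y : T) `|lazy_dist t v y - stat y|.

(* t = t_mix(eps) = max_v min { s : ||p^s(v,.) - pi||_TV < eps }:
   every vertex v has its min time <= t, and some vertex has min time >= t.
   (If some min is not attained, i.e. t_mix = infinity, no t satisfies it.) *)
Definition is_tmix (eps : R) (t : nat) : Prop :=
  (forall v : T, exists2 s : nat, (s <= t)%N & tv_to_stat s v < eps) /\
  (exists v : T, forall s : nat, (s < t)%N -> eps <= tv_to_stat s v).

(* Pr_v( X[0,N] \cap U = empty ) for the simple random walk X started at v,
   computed on the path space of walks X_0 ... X_N. *)
Definition srw_avoid_prob (U : {set T}) (v : T) (N : nat) : R :=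
  \sum_(p : (N.+1).-tuple T |
        (tnth p ord0 == v) && [forall i, tnth p i \notin U])
    \prod_(i < N) srw (tnth p (widen_ord (leqnSn N) i)) (tnth p (lift ord0 i)).

End Walks.

Definition sqrtn (n : nat) : nat := \max_(k < n.+1 | (k * k <= n)%N) k.

(* Main.v *)
Require Import Defs.
From HB Require Import structures.
From mathcomp Require Import all_boot all_order all_algebra.
From mathcomp Require Import reals ring lra zify.
Set Implicit Arguments. Unset Strict Implicit. Unset Printing Implicit Defensive.
Import Order.TTheory GRing.Theory Num.Theory.
Local Open Scope ring_scope.

Section Chain.
Variables (R : realType) (T : finType) (e : rel T).
Hypothesis esym : symmetric e.
Hypothesis degP : forall x : T, (0 < deg e x)%N.

Local Notation P := (srw R e).

Lemma deg_sum x : (\sum_y (e x y : nat))%N = deg e x.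
Proof.
rewrite /deg cardsE -sum1_card [RHS]big_mkcond /=.
by apply: eq_bigr => y _; rewrite unfold_in; case: (e x y).
Qed.

Lemma deg_sumR x : \sum_y ((e x y)%:R : R) = (deg e x)%:R.
Proof. by rewrite -deg_sum natr_sum. Qed.

Lemma srw_ge0 x y : 0 <= P x y.
Proof. by rewrite /srw divr_ge0 ?ler0n. Qed.

Lemma degR_neq0 x : (deg e x)%:R != 0 :> R.
Proof. by rewrite pnatr_eq0 -lt0n degP. Qed.

Lemma srw_sum x : \sum_y P x y = 1.
Proof. by rewrite /srw -mulr_suml deg_sumR mulfV // degR_neq0. Qed.


Fixpoint pw (i : nat) (w y : T) : R :=
  if i is i'.+1 then \sum_x P w x * pw i' x y else (w == y)%:R.

Lemma pw_ge0 i w y : 0 <= pw i w y.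
Proof.
elim: i w y => [|i IH] w y /=; first by rewrite ler0n.
by apply: sumr_ge0 => x _; rewrite mulr_ge0 ?srw_ge0.
Qed.

Lemma pw_sum i w : \sum_y pw i w y = 1.
Proof.
elim: i w => [|i IH] w /=.
  by rewrite (bigD1 w) //= eqxx big1 ?addr0 // => y /negbTE; rewrite eq_sym => ->.
rewrite exchange_big /= -(srw_sum w); apply: eq_bigr => x _.
by rewrite -mulr_sumr IH mulr1.
Qed.

Lemma pwD j k w y : pw (j + k) w y = \sum_x pw j w x * pw k x y.
Proof.
elim: j w => [|j IH] w /=.
  by rewrite (bigD1 w) //= eqxx mul1r big1 ?addr0 // => x /negbTE; rewrite eq_sym => ->; rewrite mul0r.
under eq_bigr do rewrite IH mulr_sumr.
rewrite exchange_big /=; apply: eq_bigr => z _.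
by rewrite mulr_suml; apply: eq_bigr => x _; rewrite mulrA.
Qed.

Lemma pw1 w y : pw 1 w y = P w y.
Proof.
rewrite /= (bigD1 y) //= eqxx mulr1 big1 ?addr0 // => x /negbTE ->.
by rewrite mulr0.
Qed.

Lemma pwSr k w y : pw k.+1 w y = \sum_x pw k w x * P x y.
Proof. by rewrite -addn1 pwD; under eq_bigr do rewrite pw1. Qed.


Local Notation pi := (stat R e).
Local Notation L := (lazy_srw R e).

Lemma stat_srw y : \sum_x pi x * P x y = pi y.
Proof.
rewrite /stat /srw.
transitivity (\sum_x (e y x)%:R / (2 * (nedges e)%:R) : R).
  apply: eq_bigr => x _; rewrite esym mulrC mulrA mulfVK // degR_neq0.
  by [].
by rewrite -mulr_suml deg_sumR.
Qed.

Lemma lazy_ge0 x y : 0 <= L x y.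
Proof. by rewrite /lazy_srw addr_ge0 ?divr_ge0 ?ler0n ?srw_ge0. Qed.

Lemma sum_eq1 (x : T) : \sum_y ((x == y)%:R : R) = 1.
Proof.
by rewrite (bigD1 x) //= eqxx big1 ?addr0 => [|y /negbTE]; last by rewrite eq_sym => ->.
Qed.

Lemma half_half (a : R) : a / 2 + a / 2 = a.
Proof. lra. Qed.

Lemma lazy_sum x : \sum_y L x y = 1.
Proof.
transitivity ((\sum_y ((x==y)%:R : R))/2 + (\sum_y P x y)/2).
  by rewrite !mulr_suml -big_split.
by rewrite sum_eq1 srw_sum half_half.
Qed.

Lemma stat_lazy y : \sum_x pi x * L x y = pi y.
Proof.
transitivity ((\sum_x pi x * (x==y)%:R)/2 + (\sum_x pi x * P x y)/2).
  by rewrite !mulr_suml -big_split; apply: eq_bigr => x _; rewrite /lazy_srw mulrDr !mulrA.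
rewrite stat_srw (bigD1 y) //= eqxx mulr1 big1 ?addr0 => [|x /negbTE ->]; last by rewrite mulr0.
by rewrite half_half.
Qed.

Lemma lazy_step s w y :
  lazy_dist R e s.+1 w y - pi y = \sum_x (lazy_dist R e s w x - pi x) * L x y.
Proof.
rewrite /= -{1}stat_lazy -sumrB; apply: eq_bigr => x _.
by rewrite mulrBl.
Qed.

Lemma tv_step s w : tv_to_stat R e s.+1 w <= tv_to_stat R e s w.
Proof.
rewrite /tv_to_stat ler_pM2l ?invr_gt0 ?ltr0n //.
under eq_bigr do rewrite lazy_step.
apply: (le_trans (y := \sum_y \sum_x `|lazy_dist R e s w x - pi x| * L x y)).
  apply: ler_sum => y _; apply: (le_trans (ler_norm_sum _ _ _)).
  by apply: ler_sum => x _; rewrite normrM (ger0_norm (lazy_ge0 _ _)).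
rewrite exchange_big /=; apply: ler_sum => x _.
by rewrite -mulr_sumr lazy_sum mulr1.
Qed.

Lemma tv_mono s s' w : (s <= s')%N -> tv_to_stat R e s' w <= tv_to_stat R e s w.
Proof.
move=> /subnK <-; elim: (s' - s)%N => [|d IH] //=.
by rewrite addSn; apply: le_trans (tv_step _ _) IH.
Qed.


Fixpoint beta (t k : nat) : R :=
  if t is t'.+1 then (beta t' k + (if k is k'.+1 then beta t' k' else 0)) / 2
  else (k == 0)%:R.

Lemma beta_ge0 t k : 0 <= beta t k.
Proof.
elim: t k => [|t IH] k /=; first by rewrite ler0n.
by rewrite divr_ge0 ?addr_ge0 ?IH //; case: k.
Qed.

Lemma beta_big t k : (t < k)%N -> beta t k = 0.
Proof.
elim: t k => [|t IH] [|k] //= h; rewrite IH ?(ltnW h) //.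
by rewrite IH // add0r mul0r.
Qed.

Lemma beta_sum t : \sum_(k < t.+1) beta t k = 1.
Proof.
elim: t => [|t IH]; first by rewrite big_ord1.
transitivity ((\sum_(k < t.+2) beta t k)/2 +
   (\sum_(k < t.+2) (if val k is k'.+1 then beta t k' else 0))/2).
  by rewrite !mulr_suml -big_split; apply: eq_bigr => k _ /=; rewrite mulrDl.
rewrite big_ord_recr /= beta_big // addr0 IH big_ord_recl /= add0r.
by under eq_bigr do rewrite /bump /=; rewrite IH half_half.
Qed.

Lemma lazy_decomp t w y :
  lazy_dist R e t w y = \sum_(k < t.+1) beta t k * pw k w y.
Proof.
elim: t y => [|t IH] y /=; first by rewrite big_ord1 /= mul1r.
under eq_bigr do rewrite IH mulr_suml.
rewrite exchange_big /=.
transitivity (\sum_(k < t.+1) (beta t k / 2 * pw k w y + beta t k / 2 * pw k.+1 w y)).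
  apply: eq_bigr => k _; rewrite pwSr.
  transitivity (\sum_x (beta t k / 2 * (pw k w x * (x==y)%:R) + beta t k / 2 * (pw k w x * P x y))).
    by apply: eq_bigr => x _; rewrite /lazy_srw; ring.
  rewrite big_split /= -!mulr_sumr; congr (_ * _ + _).
  by rewrite (bigD1 y) //= eqxx mulr1 big1 ?addr0 // => x /negbTE ->; rewrite mulr0.
transitivity (\sum_(k < t.+2) beta t k / 2 * pw k w y +
   \sum_(k < t.+2) (if val k is k'.+1 then beta t k' else 0) / 2 * pw k w y).
  rewrite big_split; congr (_ + _).
    by rewrite [RHS]big_ord_recr /= beta_big // mul0r mul0r addr0.
  rewrite [RHS]big_ord_recl mul0r mul0r add0r.
  by apply: eq_bigr => k _; rewrite /bump /=.
by rewrite -big_split; apply: eq_bigr => k _ /=; rewrite -mulrDl -mulrDl.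
Qed.


Lemma shift_le (G : nat -> R) (k W N : nat) : (forall m, 0 <= G m) -> (k + W <= N)%N ->
  \sum_(j < W) G (j + k)%N <= \sum_(m < N) G m.
Proof.
move=> G0 hN.
rewrite [X in _ <= X](bigID (fun i : 'I_N => i < k + W)%N) /=.
rewrite -[X in X <= _]addr0 lerD ?sumr_ge0 //.
rewrite -(big_ord_widen N G hN) big_split_ord /= -[X in X <= _]add0r lerD ?sumr_ge0 //.
by rewrite le_eqVlt; apply/orP; left; apply/eqP; apply: eq_bigr => j _; rewrite addnC.
Qed.

Variable U : {set T}.
Definition F y := \sum_(u in U) P y u.

Lemma F_ge0 y : 0 <= F y.
Proof. by apply: sumr_ge0 => u _; apply: srw_ge0. Qed.

Lemma ev_F m v : \sum_y pw m v y * F y = \sum_(u in U) pw m.+1 v u.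
Proof.
under eq_bigr do rewrite /F mulr_sumr.
rewrite exchange_big; apply: eq_bigr => u _.
by rewrite pwSr.
Qed.

Lemma mix_lb (a M : R) t x : (forall y, F y <= M) -> 0 <= M ->
  \sum_y `|lazy_dist R e t x y - pi y| <= a ->
  \sum_y pi y * F y - a * M <= \sum_y lazy_dist R e t x y * F y.
Proof.
move=> FM M0 ha.
have h : \sum_y lazy_dist R e t x y * F y - \sum_y pi y * F y =
   \sum_y (lazy_dist R e t x y - pi y) * F y.
  by rewrite -sumrB; apply: eq_bigr => y _; rewrite mulrBl.
have : - (\sum_y (lazy_dist R e t x y - pi y) * F y) <= a * M.
  apply: (le_trans (y := \sum_y `|lazy_dist R e t x y - pi y| * M)).
    rewrite -sumrN; apply: ler_sum => y _.
    rewrite -mulrN; apply: (le_trans (ler_norm _)).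
    rewrite normrM normrN ler_wpM2l // ger0_norm ?F_ge0 //.
  by rewrite -mulr_suml ler_wpM2r.
lra.
Qed.


Definition ev k x := \sum_y pw k x y * F y.

Lemma ev_ge0 k x : 0 <= ev k x.
Proof. by apply: sumr_ge0 => y _; rewrite mulr_ge0 ?pw_ge0 ?F_ge0. Qed.

Lemma evD j k v : ev (j + k) v = \sum_x pw j v x * ev k x.
Proof.
rewrite /ev; under eq_bigr do rewrite pwD mulr_suml.
rewrite exchange_big; apply: eq_bigr => x _.
by rewrite mulr_sumr; apply: eq_bigr => y _; rewrite mulrA.
Qed.

Lemma ev_lazy t x : \sum_(k < t.+1) beta t k * ev k x = \sum_y lazy_dist R e t x y * F y.
Proof.
under [RHS]eq_bigr do rewrite lazy_decomp mulr_suml.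
rewrite exchange_big; apply: eq_bigr => k _.
by rewrite /ev mulr_sumr; apply: eq_bigr => y _; rewrite mulrA.
Qed.

Lemma window (a M : R) t W v : (forall y, F y <= M) -> 0 <= M ->
  (forall x, \sum_y `|lazy_dist R e t x y - pi y| <= a) ->
  W%:R * (\sum_y pi y * F y - a * M) <= \sum_(m < W + t) ev m v.
Proof.
move=> FM M0 ha; set th := (X in _ * X).
have hj j : th <= \sum_(k < t.+1) beta t k * ev (j + k) v.
  have -> : \sum_(k < t.+1) beta t k * ev (j + k) v =
     \sum_x pw j v x * \sum_y lazy_dist R e t x y * F y.
    under eq_bigr do rewrite evD mulr_sumr.
    rewrite exchange_big; apply: eq_bigr => x _.
    by rewrite -ev_lazy mulr_sumr; apply: eq_bigr => k _; rewrite mulrCA.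
  rewrite -[X in X <= _]mul1r -(pw_sum j v) mulr_suml; apply: ler_sum => x _.
  by rewrite ler_wpM2l ?pw_ge0 // mix_lb.
apply: (le_trans (y := \sum_(j < W) \sum_(k < t.+1) beta t k * ev (j + k) v)).
  by rewrite mulr_natl -[X in th *+ X](card_ord W) -sumr_const; apply: ler_sum => j _; apply: hj.
rewrite exchange_big /= -[X in _ <= X]mul1r -(beta_sum t) mulr_suml.
apply: ler_sum => k _; rewrite -mulr_sumr ler_wpM2l ?beta_ge0 //.
apply: (shift_le (G := fun m => ev m v)) => //; first by move=> m; apply: ev_ge0.
by rewrite addnC leq_add2l -ltnS.
Qed.


Fixpoint q k w : R :=
  if k is k'.+1 then \sum_y P w y * ((y \notin U)%:R * q k' y) else 1.

Lemma q01 k w : 0 <= q k w <= 1.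
Proof.
elim: k w => [|k IH] w /=; first by rewrite ler01 lexx.
apply/andP; split.
  apply: sumr_ge0 => y _; rewrite mulr_ge0 ?srw_ge0 ?mulr_ge0 ?ler0n //.
  by case/andP: (IH y).
rewrite -[leRHS](srw_sum w); apply: ler_sum => y _; rewrite ler_piMr ?srw_ge0 //.
case/andP: (IH y) => _ h; case: (y \notin U) => /=; by rewrite ?mulr1n ?mulr0n ?mul1r ?mul0r ?ler01.
Qed.

Definition z k w := \sum_(m < k) ev m w.

Lemma ev0 w : ev 0 w = \sum_y P w y * (y \in U)%:R.
Proof.
rewrite /ev /= (bigD1 w) //= eqxx mul1r big1 ?addr0 => [|y /negbTE]; last first.
  by rewrite eq_sym => ->; rewrite mul0r.
rewrite /F big_mkcond /=; apply: eq_bigr => y _.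
by case: (y \in U); rewrite ?mulr1 ?mulr0.
Qed.

Lemma zS k w : z k.+1 w = \sum_y P w y * ((y \in U)%:R + z k y).
Proof.
rewrite /z big_ord_recl.
under eq_bigr => i _ do rewrite (_ : ev (lift ord0 i) w = ev (1 + i) w) // evD.
rewrite exchange_big /= ev0 -big_split /=; apply: eq_bigr => y _.
by rewrite mulrDr -mulr_sumr -/(pw 1 w y) pw1.
Qed.


Section Rho.
Variable rho : R.
Hypothesis Frho : forall x, F x <= rho.
Hypothesis rho0 : 0 <= rho.

Lemma ev_le m w : ev m w <= rho.
Proof.
rewrite /ev -[leRHS]mul1r -(pw_sum m w) mulr_suml; apply: ler_sum => y _.
by rewrite ler_wpM2l ?pw_ge0.
Qed.

Lemma z_le k w : z k w <= k%:R * rho.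
Proof.
rewrite /z mulr_natl -[X in rho *+ X](card_ord k) -sumr_const.
by apply: ler_sum => m _; apply: ev_le.
Qed.

Lemma main_hit k w : z k w <= (1 - q k w) * (1 + k%:R * rho).
Proof.
elim: k w => [|k IH] w; first by rewrite /z big_ord0 /= subrr mul0r.
rewrite zS /= -{2}(srw_sum w) -sumrB mulr_suml; apply: ler_sum => y _.
rewrite (_ : P w y - P w y * ((y \notin U)%:R * q k y) = P w y * (1 - (y \notin U)%:R * q k y)); last by ring.
rewrite -[leRHS]mulrA ler_wpM2l ?srw_ge0 //.
have hk : 1 + k%:R * rho <= 1 + k.+1%:R * rho.
  by rewrite lerD2l ler_wpM2r // ler_nat.
case: (boolP (y \in U)) => hy /=.
  rewrite mul0r subr0 mul1r; apply: le_trans hk.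
  by rewrite lerD2l z_le.
rewrite add0r mul1r; apply: (le_trans (IH y)).
by rewrite ler_wpM2l // subr_ge0; case/andP: (q01 k y).
Qed.

End Rho.


Lemma forall_cons n (x : T) (p : n.-tuple T) :
  [forall i, tnth [tuple of x :: p] i \notin U] = (x \notin U) && [forall i, tnth p i \notin U].
Proof.
apply/forallP/andP => [h|[hx /forallP h] i].
  split; first by have := h ord0; rewrite tnth0.
  by apply/forallP => i; have := h (lift ord0 i); rewrite tnthS.
by case: (unliftP ord0 i) => [j ->|->]; rewrite ?tnthS ?tnth0.
Qed.

Lemma avoid_cons N v : srw_avoid_prob R e U v N = (v \notin U)%:R *
  \sum_(p' : N.-tuple T | [forall i, tnth p' i \notin U])
    \prod_(i < N) P (tnth [tuple of v :: p'] (widen_ord (leqnSn N) i))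
                    (tnth [tuple of v :: p'] (lift ord0 i)).
Proof.
rewrite /srw_avoid_prob.
rewrite (reindex_onto (fun p' : N.-tuple T => [tuple of v :: p']) (fun p => [tuple of behead p])) /=; last first.
  move=> p /andP[/eqP h _]; rewrite [RHS]tuple_eta; apply: val_inj => /=.
  by rewrite -h.
have hb (j : N.-tuple T) : ([tuple of behead [tuple of v :: j]] == j) = true.
  by apply/eqP/val_inj.
under eq_bigl do rewrite tnth0 eqxx forall_cons hb andbT /=.
case: (v \notin U); first by rewrite mul1r.
by rewrite mul0r big_pred0.
Qed.

Lemma avoid0 v : srw_avoid_prob R e U v 0 = (v \notin U)%:R.
Proof.
rewrite avoid_cons (big_pred1 [tuple]) ?big_ord0 ?mulr1 // => p.
have -> : pred1 [tuple] p = true by apply/eqP; apply: tuple0.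
by apply/forallP => -[].
Qed.

Lemma avoid_rec N v : srw_avoid_prob R e U v N.+1 =
  (v \notin U)%:R * \sum_y P v y * srw_avoid_prob R e U y N.
Proof.
rewrite avoid_cons; congr (_ * _).
under eq_bigr => p' _.
  rewrite big_ord_recl.
  rewrite (_ : tnth [tuple of v :: p'] (widen_ord (leqnSn N.+1) ord0) = v); last by rewrite (tnth_nth v).
  rewrite tnthS.
  under eq_bigr => i _.
    rewrite (_ : tnth [tuple of v :: p'] (widen_ord (leqnSn N.+1) (lift ord0 i)) = tnth p' (widen_ord (leqnSn N) i)); last by rewrite !(tnth_nth v).
    rewrite tnthS.
  over.
over.
rewrite (partition_big (fun p' : N.+1.-tuple T => tnth p' ord0) xpredT) //=.
apply: eq_bigr => y _.
rewrite /srw_avoid_prob mulr_sumr; apply: eq_big => [p'|p' /andP[_ /eqP ->]] //.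
by rewrite andbC.
Qed.

Lemma avoid_q N v : srw_avoid_prob R e U v N = (v \notin U)%:R * q N v.
Proof.
elim: N v => [|N IH] v; first by rewrite avoid0 /= mulr1.
rewrite avoid_rec /=; congr (_ * _); apply: eq_bigr => y _.
by rewrite IH.
Qed.


Hypothesis eirr : irreflexive e.

Lemma nedges_bounds (x : T) : (0 < nedges e)%N /\ (2 * nedges e <= #|T| * #|T|)%N.
Proof.
rewrite /nedges; set c := #|_|.
have hc : (c <= #|T| * #|T|)%N by rewrite /c -card_prod max_card.
suff h2 : (2 <= c)%N by split; lia.
have /card_gt0P [y] := degP x; rewrite inE => hxy.
have hne : x != y by apply/eqP => h; move: hxy; rewrite h eirr.
have : [set (x, y); (y, x)] \subset [set p : T * T | e p.1 p.2].
  by apply/subsetP => p; rewrite !inE => /orP[] /eqP -> /=; rewrite // esym.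
move/subset_leq_card; rewrite cards2.
suff -> : (x, y) != (y, x) by [].
by apply/eqP => -[h _]; move/eqP: hne.
Qed.


Lemma piF : \sum_y pi y * F y = \sum_(u in U) pi u.
Proof.
under eq_bigr do rewrite /F mulr_sumr.
rewrite exchange_big; apply: eq_bigr => u _.
by rewrite stat_srw.
Qed.

Section Delta.
Variable d : R.
Hypothesis d0 : 0 < d.
Hypothesis hdeg : forall y, d * #|T|%:R <= (deg e y)%:R.

Lemma stat_lb x : d / #|T|%:R <= pi x.
Proof.
have n0 : 0 < #|T|%:R :> R by rewrite ltr0n; apply/card_gt0P; exists x.
have [E0 E2] := nedges_bounds x.
have hE : 0 < 2 * (nedges e)%:R :> R by rewrite mulr_gt0 ?ltr0n.
have hE2 : 2 * (nedges e)%:R <= #|T|%:R * #|T|%:R :> R.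
  by rewrite -natrM -natrM ler_nat.
rewrite /stat.
apply: (le_trans (y := (deg e x)%:R / (#|T|%:R * #|T|%:R))).
  rewrite ler_pdivlMr ?mulr_gt0 //.
  by rewrite mulrA mulfVK ?hdeg // lt0r_neq0.
apply: ler_wpM2l; first exact: ler0n.
by rewrite lef_pV2 ?posrE //; apply: mulr_gt0.
Qed.



Lemma F_le y : F y <= #|U|%:R / (d * #|T|%:R).
Proof.
have n0 : 0 < #|T|%:R :> R by rewrite ltr0n; apply/card_gt0P; exists y.
have dn0 : 0 < d * #|T|%:R by rewrite mulr_gt0.
apply: (le_trans (y := \sum_(u in U) (deg e y)%:R^-1)).
  apply: ler_sum => u _; rewrite /srw -[leRHS]mul1r; apply: ler_wpM2r.
    by rewrite invr_ge0 ler0n.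
  by case: (e y u); rewrite ?ler01 ?lexx.
rewrite sumr_const -[leLHS]mulr_natl; apply: ler_wpM2l; first exact: ler0n.
rewrite lef_pV2 ?posrE ?hdeg //.
by apply: lt_le_trans (hdeg y).
Qed.

End Delta.

End Chain.

Lemma arith (R : realFieldType) (d eps A B h : R) : 0 < d -> 0 < eps -> eps*4 <= d*d -> eps*2 <= d -> eps <= A -> A <= 2*B -> 
  (3/4)*B*d <= h*(1 + A/d) -> eps*d/4 <= h.
Proof.
move=> d0 e0 h1 h2 hA hAB hm.
have hm' : (3/4)*B*d*d <= h*(d + A).
  have := ler_wpM2r (ltW d0) hm.
  have -> : h * (1 + A / d) * d = h*(d+A) by field; rewrite lt0r_neq0.
  by [].
have k1 : eps*(d+A) <= (3/2)*A*d.
  have : 0 <= (A - eps) * (3/2*d - eps) by apply: mulr_ge0; lra.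
  nra.
have k2 : (3/8)*A*d*d <= (3/4)*B*d*d.
  have : 0 <= (2*B - A) * (d*d) by apply: mulr_ge0; nra.
  nra.
have dA : 0 < d + A by lra.
have : eps * d / 4 * (d + A) <= h * (d + A) by nra.
by rewrite ler_pM2r.
Qed.

Lemma sqrtn_ub n : (n < (sqrtn n).+1 * (sqrtn n).+1)%N.
Proof.
case: (leqP (sqrtn n).+1 n) => h; last by apply: (leq_trans h); rewrite leq_pmulr.
rewrite ltnNge; apply/negP => h2.
have := @leq_bigmax_cond _ (fun k : 'I_n.+1 => (k * k <= n)%N) (fun k => nat_of_ord k)
   (Ordinal (h : (sqrtn n).+1 < n.+1)%N) h2.
by rewrite /= -/(sqrtn n) ltnn.
Qed.

Lemma sqrtn_pos n : (0 < n)%N -> (0 < sqrtn n)%N.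
Proof.
move=> n0.
have := @leq_bigmax_cond _ (fun k : 'I_n.+1 => (k * k <= n)%N) (fun k => nat_of_ord k)
   (Ordinal (n0 : 1 < n.+1)%N).
by rewrite /= mul1n => /(_ n0).
Qed.



Lemma eps_bound (R : realFieldType) (eps sq n Uc N : R) : 0 < eps -> 0 < n -> sq*sq = n -> 0 <= sq -> sq <= N ->
  eps*sq <= Uc -> eps <= N * (Uc / n).
Proof.
move=> e0 n0 hsq sq0 hN hU.
have U0 : 0 <= Uc by apply: le_trans hU; rewrite mulr_ge0 // ltW.
have h1 : eps * sq * sq <= Uc * sq by rewrite ler_wpM2r.
have h2 : Uc * sq <= Uc * N by rewrite ler_wpM2l.
have h : eps * n <= N * Uc by rewrite -hsq mulrA mulrC [N * _]mulrC; apply: le_trans h2; rewrite mulrC.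
by rewrite mulrA ler_pdivlMr.
Qed.

Lemma sq_bound n : (0 < n)%N -> (n <= (2 * sqrtn n) * (2 * sqrtn n))%N.
Proof. move=> n0; have := sqrtn_ub n; have := sqrtn_pos n0; nia. Qed.

Lemma sqrt_le_2s (R : realType) n : (0 < n)%N -> Num.sqrt (n%:R : R) <= (2 * sqrtn n)%:R.
Proof.
move=> n0.
rewrite -[leRHS]ger0_norm ?ler0n // -sqrtr_sqr ler_sqrt ?sqr_ge0 //.
by rewrite -natrX ler_nat expnS expn1 sq_bound.
Qed.

Theorem claim3p3 (R : realType) (delta : R) (hdelta : 0 < delta) :
  exists2 c : R, 0 < c &
  forall (eps : R), 0 < eps -> eps < c ->
  forall (T : finType) (e : rel T), simple_graph e ->
  eps ^-2 <= (#|T|)%:R ->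
  (forall x : T, delta * (#|T|)%:R <= (deg e x)%:R) ->
  forall (U : {set T}), eps * Num.sqrt ((#|T|)%:R) <= (#|U|)%:R ->
  forall (v : T) (t : nat), is_tmix e (eps / 2) t ->
  srw_avoid_prob R e U v (2 * (t + sqrtn #|T|))
    <= 1 - eps * delta / 4.
Proof.
have c0 : 0 < delta * delta / (4 * (1 + delta)) by rewrite divr_gt0 ?mulr_gt0 //; lra.
exists (delta * delta / (4 * (1 + delta))) => // eps eps0 epsc T e [esym eirr] hn hdeg U hU v t [hmix1 _].
have epsc' : eps * (4 * (1 + delta)) < delta * delta by rewrite -ltr_pdivlMr //; lra.
have e1 : eps * 4 <= delta * delta by nra.
have e2 : eps * 2 <= delta by nra.
set n := #|T| in hn hdeg hU *.
have nR0 : 0 < n%:R :> R.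
  by apply: lt_le_trans hn; rewrite invr_gt0 exprn_gt0.
have n0 : (0 < n)%N by rewrite -(ltr0n R).
have degP : forall x, (0 < deg e x)%N.
  by move=> x; rewrite -(ltr0n R); apply: lt_le_trans (hdeg x); rewrite mulr_gt0.
have hmix : forall w, \sum_y `|lazy_dist R e t w y - stat R e y| <= eps.
  move=> w; case: (hmix1 w) => s hs htv.
  have := le_lt_trans (tv_mono R esym degP w hs) htv.
  rewrite /tv_to_stat; lra.
set M := #|U|%:R / (delta * n%:R).
have FM := F_le U hdelta hdeg.
have M0 : 0 <= M by rewrite divr_ge0 ?ler0n // mulr_ge0 // ltW.
set s := sqrtn n.
set N := (2 * (t + s))%N.
set W := (t + 2 * s)%N.
have hw := window degP W v FM M0 hmix.
rewrite (_ : (W + t = N)%N) in hw; last by rewrite /W /N; lia.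
have hz := main_hit degP FM M0 N v.
have hpi : #|U|%:R * (delta / n%:R) <= \sum_y stat R e y * F R e U y.
  rewrite piF //; apply: (le_trans (y := \sum_(u in U) delta / n%:R)).
    by rewrite sumr_const -[leRHS]mulr_natl.
  by apply: ler_sum => u _; exact: stat_lb.
rewrite avoid_q.
have [q0 q1] := andP (q01 R degP U N v).
apply: (le_trans (y := q R e U N v)).
  by case: (v \notin U); rewrite ?mul1r ?mul0r.
have [u hu] : {u : R | u = #|U|%:R / n%:R} by exists (#|U|%:R / n%:R).
have u0 : 0 <= u by rewrite hu divr_ge0 ?ler0n.
have hM : M = u / delta by rewrite /M hu invfM; field; rewrite ?lt0r_neq0.
suff : eps * delta / 4 <= 1 - q R e U N v by lra.
apply: (arith (A := N%:R * u) (B := W%:R * u)) => //.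
- rewrite hu; apply: (@eps_bound _ eps (Num.sqrt n%:R)) => //.
  + by rewrite -expr2 sqr_sqrtr // ltW.
  + exact: sqrtr_ge0.
  + have h2s := @sqrt_le_2s R n n0; apply: (le_trans h2s); rewrite ler_nat /N -/s.
    by rewrite leq_mul2l leq_addl.
- rewrite mulrA -natrM; apply: ler_wpM2r => //; by rewrite ler_nat /W /N leq_mul2l leq_add2l leq_pmull.
- have th : 3/4 * u * delta <= \sum_y stat R e y * F R e U y - eps * M.
    have h1 : u * delta <= \sum_y stat R e y * F R e U y.
      by apply: le_trans hpi; rewrite hu mulrA mulrAC.
    have h2 : eps * M <= u * delta / 4.
      rewrite hM mulrA ler_pdivrMr //; nra.
    lra.
  have hW : 0 <= W%:R :> R by apply: ler0n.
  apply: (le_trans (y := W%:R * (\sum_y stat R e y * F R e U y - eps * M))).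
    by rewrite (_ : 3/4 * (W%:R * u) * delta = W%:R * (3/4 * u * delta)); [apply: ler_wpM2l | ring].
  apply: (le_trans hw).
  have -> : N%:R * u / delta = N%:R * M by rewrite hM mulrA.
  exact: hz.
Qed.
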